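(* Let $P$ be a finite self-dual poset and let $\kappa:P\to P$ be an order-reversing bijection which is an involution. For $I\in\mathcal J(P)$ let $I'$ be the order ideal generated by the antichain $\kappa(\max(I))$. Then for all $I\in\mathcal J(P)$, $\rho^{-1}(I')=(\rho(I))'$.
   Context: $\mathcal J(P)$ is the set of order ideals of $P$. Rowmotion $\rho:\mathcal J(P)\to\mathcal J(P)$ sends $I$ to the order ideal generated by $\min(P\setminus I)$; it is a bijection. An order-reversing bijection $\kappa$ satisfies $x\le y\iff\kappa(x)\ge\kappa(y)$. *)

(* Defs.v *)
From mathcomp Require Import all_boot all_order.
Set Implicit Arguments. Unset Strict Implicit. Unset Printing Implicit Defensive.
Import Order.Theory.
Local Open Scope order_scope.

Section Rowmotion.
Context {d : Order.disp_t} {P : finPOrderType d}.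

Definition is_ideal (I : {set P}) : bool :=
  [forall x, forall y, (y \in I) && (x <= y) ==> (x \in I)].

Definition ideal_gen (A : {set P}) : {set P} :=
  [set x | [exists y in A, x <= y]].

Definition maxset_of (A : {set P}) : {set P} :=
  [set x in A | [forall y in A, (x <= y) ==> (y == x)]].
Definition minset_of (A : {set P}) : {set P} :=
  [set x in A | [forall y in A, (y <= x) ==> (y == x)]].

Definition rowmotion (I : {set P}) : {set P} := ideal_gen (minset_of (~: I)).

(* inverse rowmotion on J(P): the (unique, rowmotion being a bijection of J(P))
   order ideal J with rowmotion J = I *)
Definition rowmotion_inv (I : {set P}) : {set P} :=
  odflt set0 [pick J | is_ideal J && (rowmotion J == I)].

Definition kprime (kappa : P -> P) (I : {set P}) : {set P} :=
  ideal_gen (kappa @: maxset_of I).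

End Rowmotion.

(* Main.v *)
Require Import Defs.
From mathcomp Require Import all_boot all_order.
Local Open Scope order_scope.
Import Order.Theory.
Set Implicit Arguments. Unset Strict Implicit.

Section Aux.
Context {d : Order.disp_t} {P : finPOrderType d}.

Definition up_gen (A : {set P}) : {set P} := [set x | [exists y in A, y <= x]].

Lemma min_below (A : {set P}) x : x \in A -> exists2 m, m \in minset_of A & m <= x.
Proof.
suff H : forall n x, leq #|[set y in A | y < x]| n -> x \in A ->
    exists2 m, m \in minset_of A & m <= x by apply: H (leqnn _).
elim=> [|n IH] {}x Hc xA.
  have xm : x \in minset_of A.
    rewrite inE xA /=; apply/forall_inP => y yA; apply/implyP => yx.
    apply/negPn/negP => nyx.
    have : y \in [set y in A | y < x] by rewrite inE yA lt_neqAle nyx yx.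
    by move=> yin; move: Hc; rewrite leqn0 => /eqP/card0_eq/(_ y); rewrite yin.
  by exists x.
case: (boolP (x \in minset_of A)) => [xm|]; first by exists x.
rewrite inE xA /= => /forall_inPn [y yA]; rewrite negb_imply => /andP [yx nyx].
have ylt : y < x by rewrite lt_neqAle nyx yx.
have [m mm my] : exists2 m, m \in minset_of A & m <= y.
  apply: (IH y) => //; rewrite -ltnS; apply: leq_trans Hc; apply: proper_card.
  apply/properP; split.
    apply/subsetP => z; rewrite !inE => /andP [-> zy] /=; exact: lt_trans zy ylt.
  by exists y; rewrite !inE ?yA ?ylt // ltxx andbF.
by exists m => //; exact: le_trans my yx.
Qed.

Lemma max_above (A : {set P}) x : x \in A -> exists2 m, m \in maxset_of A & x <= m.
Proof.
suff H : forall n x, leq #|[set y in A | x < y]| n -> x \in A ->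
    exists2 m, m \in maxset_of A & x <= m by apply: H (leqnn _).
elim=> [|n IH] {}x Hc xA.
  have xm : x \in maxset_of A.
    rewrite inE xA /=; apply/forall_inP => y yA; apply/implyP => yx.
    apply/negPn/negP => nyx.
    have : y \in [set y in A | x < y] by rewrite inE yA lt_neqAle eq_sym nyx yx.
    by move=> yin; move: Hc; rewrite leqn0 => /eqP/card0_eq/(_ y); rewrite yin.
  by exists x.
case: (boolP (x \in maxset_of A)) => [xm|]; first by exists x.
rewrite inE xA /= => /forall_inPn [y yA]; rewrite negb_imply => /andP [yx nyx].
have ylt : x < y by rewrite lt_neqAle eq_sym nyx yx.
have [m mm my] : exists2 m, m \in maxset_of A & y <= m.
  apply: (IH y) => //; rewrite -ltnS; apply: leq_trans Hc; apply: proper_card.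
  apply/properP; split.
    apply/subsetP => z; rewrite !inE => /andP [-> zy] /=; exact: lt_trans ylt zy.
  by exists y; rewrite !inE ?yA ?ylt // ltxx andbF.
by exists m => //; exact: le_trans yx my.
Qed.

Lemma ideal_genP (A : {set P}) x : reflect (exists2 y, y \in A & x <= y) (x \in ideal_gen A).
Proof. rewrite inE; exact: (iffP exists_inP) => -[y]; exists y. Qed.

Lemma up_genP (A : {set P}) x : reflect (exists2 y, y \in A & y <= x) (x \in up_gen A).
Proof. rewrite inE; exact: (iffP exists_inP) => -[y]; exists y. Qed.

Arguments up_genP A x.
Arguments ideal_genP A x.

Lemma is_idealP (I : {set P}) : is_ideal I -> forall x y, y \in I -> x <= y -> x \in I.
Proof. by move=> /forallP H x y yI xy; move/forallP: (H x) => /(_ y); rewrite yI xy. Qed.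

Lemma ideal_gen_ideal (A : {set P}) : is_ideal (ideal_gen A).
Proof.
apply/forallP => x; apply/forallP => y; apply/implyP => /andP [/ideal_genP [z zA yz] xy].
by apply/ideal_genP; exists z => //; exact: le_trans xy yz.
Qed.

Lemma ideal_eq (I : {set P}) : is_ideal I -> ideal_gen (maxset_of I) = I.
Proof.
move=> HI; apply/setP => x; apply/ideal_genP/idP.
  by case=> y; rewrite inE => /andP [yI _]; exact: is_idealP.
by move=> /max_above [m mm xm]; exists m.
Qed.

Definition antichain (A : {set P}) := forall a b, a \in A -> b \in A -> a <= b -> a = b.

Lemma max_ideal_gen (A : {set P}) : antichain A -> maxset_of (ideal_gen A) = A.
Proof.
move=> HA; apply/setP => x; apply/idP/idP.
  rewrite inE => /andP [/ideal_genP [y yA xy] /forall_inP H].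
  have yi : y \in ideal_gen A by apply/ideal_genP; exists y.
  by move/implyP: (H y yi) => /(_ xy) /eqP <-.
move=> xA; rewrite inE; apply/andP; split; first by apply/ideal_genP; exists x.
apply/forall_inP => y /ideal_genP [z zA yz]; apply/implyP => xy.
have xz := HA _ _ xA zA (le_trans xy yz); subst z.
by rewrite eq_le xy yz.
Qed.

Lemma min_up_gen (A : {set P}) : antichain A -> minset_of (up_gen A) = A.
Proof.
move=> HA; apply/setP => x; apply/idP/idP.
  rewrite inE => /andP [/up_genP [y yA xy] /forall_inP H].
  have yi : y \in up_gen A by apply/up_genP; exists y.
  by move/implyP: (H y yi) => /(_ xy) /eqP <-.
move=> xA; rewrite inE; apply/andP; split; first by apply/up_genP; exists x.
apply/forall_inP => y /up_genP [z zA yz]; apply/implyP => xy.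
have xz := HA _ _ zA xA (le_trans yz xy); subst z.
by rewrite eq_le xy yz.
Qed.

Lemma maxset_antichain (A : {set P}) : antichain (maxset_of A).
Proof.
move=> a b; rewrite !inE => /andP [_ /forall_inP Ha] /andP [bA _] ab.
by move/implyP: (Ha b bA) => /(_ ab) /eqP.
Qed.

Lemma minset_antichain (A : {set P}) : antichain (minset_of A).
Proof.
move=> a b; rewrite !inE => /andP [aA _] /andP [_ /forall_inP Hb] ab.
by move/implyP: (Hb a aA) => /(_ ab) /eqP.
Qed.

Lemma compl_ideal (J : {set P}) : is_ideal J -> J = ~: up_gen (minset_of (~: J)).
Proof.
move=> HJ; apply/setP => x; rewrite inE; apply/idP/idP.
  move=> xJ; apply/up_genP => -[m]; rewrite inE => /andP [].
  by rewrite inE => /negP mJ _ mx; apply: mJ; exact: is_idealP xJ mx.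
apply: contraR => xJ; apply/up_genP.
have := @min_below (setC J) x; rewrite inE => /(_ xJ) [m mm mx].
by exists m.
Qed.

Lemma rowmotion_inj (J1 J2 : {set P}) : is_ideal J1 -> is_ideal J2 ->
  rowmotion J1 = rowmotion J2 -> J1 = J2.
Proof.
move=> H1 H2 E.
have E' : minset_of (~: J1) = minset_of (~: J2).
  by rewrite -(max_ideal_gen (@minset_antichain (~: J1))) -[RHS](max_ideal_gen (@minset_antichain (~: J2))); congr maxset_of.
by rewrite (compl_ideal H1) (compl_ideal H2) E'.
Qed.

Lemma rowmotion_surj (K : {set P}) : is_ideal K ->
  is_ideal (~: up_gen (maxset_of K)) /\ rowmotion (~: up_gen (maxset_of K)) = K.
Proof.
move=> HK; split.
  apply/forallP => x; apply/forallP => y; apply/implyP => /andP [].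
  rewrite !in_setC => yn xy; apply: contra yn => /up_genP [z zA zx].
  by apply/up_genP; exists z => //; exact: le_trans xy.
rewrite /rowmotion setCK min_up_gen; [exact: ideal_eq | exact: maxset_antichain].
Qed.

Lemma rowmotion_invE (K : {set P}) : is_ideal K ->
  rowmotion_inv K = ~: up_gen (maxset_of K).
Proof.
move=> HK; have [H1 H2] := rowmotion_surj HK.
rewrite /rowmotion_inv; case: pickP => [J /andP [HJ /eqP EJ]|/(_ ( ~: up_gen (maxset_of K)))].
  by apply: rowmotion_inj => //; rewrite EJ H2.
by rewrite H1 H2 eqxx.
Qed.

End Aux.

Theorem lemma5p13 (d : Order.disp_t) (P : finPOrderType d) (kappa : P -> P)
  (kappa_bij : bijective kappa)
  (kappa_rev : forall x y : P, (x <= y) = (kappa y <= kappa x))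
  (kappa_inv : involutive kappa)
  (I : {set P}) (HI : is_ideal I) :
  rowmotion_inv (kprime kappa I) = kprime kappa (rowmotion I).
Proof.
have kinj : injective kappa := inv_inj kappa_inv.
have ach : antichain (kappa @: maxset_of I).
  move=> a b /imsetP [a' a'I ->] /imsetP [b' b'I ->]; rewrite -kappa_rev => ba.
  by rewrite (maxset_antichain b'I a'I ba).
rewrite rowmotion_invE; last exact: ideal_gen_ideal.
rewrite /kprime max_ideal_gen // /rowmotion max_ideal_gen ?minset_antichain //.
apply/setP => x; rewrite inE.
have E1 : (x \in up_gen (kappa @: maxset_of I)) = (kappa x \in I).
  apply/up_genP/idP.
    case=> y /imsetP [a aI ->]; rewrite kappa_rev kappa_inv => xa.
    by move: aI; rewrite inE => /andP [aI _]; exact: is_idealP xa.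
  move=> /max_above [m mm xm]; exists (kappa m); first exact: imset_f.
  by rewrite kappa_rev kappa_inv.
rewrite E1; apply/idP/ideal_genP.
  move=> xn; have := @min_below _ _ (setC I) (kappa x); rewrite inE => /(_ xn) [m mm mx].
  by exists (kappa m); [exact: imset_f | rewrite kappa_rev kappa_inv].
case=> y /imsetP [m mm ->]; rewrite kappa_rev kappa_inv => mx.
apply/negP => xI; move: mm; rewrite !inE => /andP [/negP []].
exact: is_idealP xI mx.
exact: minset_antichain.
Qed.
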